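(* Let $\tau>3$. For Lebesgue-almost every $\gamma\in(0,\tfrac12)$ the following holds. Let $\alpha\in D_{\gamma,\tau}$ with partial quotients $a_1,a_2,\dots$ and convergents $p_n/q_n$, and suppose that for infinitely many even $n$, $$\frac{p_n}{q_n}+\frac{\gamma}{q_n^{\tau+1}}>\frac{p_{n+2}}{q_{n+2}}-\frac{\gamma}{q_{n+2}^{\tau+1}}.$$ Then for every $\varepsilon>0$ (arbitrarily small) there exists $C>0$ such that $a_{n+2}\le C\,q_n^{2+\varepsilon}$ for these $n$.
   Context: For $x\in\mathbb{R}$, $\|x\|:=\min_{p\in\mathbb{Z}}|x-p|$; $\mathbb{N}=\{1,2,\dots\}$. For $\gamma>0,\tau\ge1$, $D_{\gamma,\tau}:=\{\alpha\in(0,1): \|q\alpha\|\ge\gamma/q^\tau\ \forall q\in\mathbb{N}\}$; its elements are irrational. For irrational $\alpha\in(0,1)$ write $\alpha=\cfrac{1}{a_1+\cfrac{1}{a_2+\cdots}}$ (partial quotients $a_n\in\mathbb{N}$), and let $p_n/q_n$ ($n\ge0$) be its convergents: $p_{-1}=1,q_{-1}=0,p_0=0,q_0=1$, $p_n=a_np_{n-1}+p_{n-2}$, $q_n=a_nq_{n-1}+q_{n-2}$. *)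

(* Defs.v *)
From HB Require Import structures.
From mathcomp Require Import all_boot all_order all_algebra.
From mathcomp Require Import all_classical all_reals all_analysis.
Set Implicit Arguments. Unset Strict Implicit. Unset Printing Implicit Defensive.
Import Order.TTheory GRing.Theory Num.Theory.
Local Open Scope ring_scope.

Section CF.
Variable R : realType.

(* D_{gamma,tau}: alpha in (0,1) with ||q alpha|| >= gamma / q^tau for all q >= 1,
   where ||x|| = min_{p in Z} |x - p|; "min_p |x-p| >= c" is written as
   "forall p : int, |x - p| >= c". *)
Definition Dgt (gamma tau : R) : set R :=
  [set alpha | 0 < alpha < 1 /\
     forall (q : nat) (p : int), (0 < q)%N ->
       gamma / (q%:R `^ tau) <= `|q%:R * alpha - p%:~R| ].

Definition gauss (x : R) : R := x^-1 - (Num.floor x^-1)%:~R.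

Definition cf_rem (alpha : R) (n : nat) : R := iter n gauss alpha.

(* partial quotients: a_n = floor (1 / x_{n-1}) for n >= 1 (a_0 := 0). *)
Definition pq (alpha : R) (n : nat) : int :=
  match n with 0 => 0 | m.+1 => Num.floor (cf_rem alpha m)^-1 end.

(* convergent recursion: returns ((p_{n-1}, q_{n-1}), (p_n, q_n)). *)
Fixpoint conv_aux (a : nat -> int) (n : nat) : (int * int) * (int * int) :=
  match n with
  | 0 => ((1, 0), (0, 1))
  | m.+1 => let: ((pp, qq), (p, q)) := conv_aux a m in
            ((p, q), (a m.+1 * p + pp, a m.+1 * q + qq))
  end.

Definition cf_p (alpha : R) (n : nat) : int := (conv_aux (pq alpha) n).2.1.
Definition cf_q (alpha : R) (n : nat) : int := (conv_aux (pq alpha) n).2.2.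

End CF.

(* Main.v *)
Require Import Defs.
From HB Require Import structures.
From mathcomp Require Import all_boot all_order all_algebra.
From mathcomp Require Import all_classical all_reals all_analysis.
From mathcomp Require Import zify ring lra.
Import Order.TTheory GRing.Theory Num.Theory.
Local Open Scope ring_scope.
Section Alg.
Variable a : nat -> int.
Local Notation pp n := (conv_aux a n).1.1.
Local Notation qq n := (conv_aux a n).1.2.
Local Notation p n := (conv_aux a n).2.1.
Local Notation q n := (conv_aux a n).2.2.

Lemma conv_S n : conv_aux a n.+1 =
  ((p n, q n), (a n.+1 * p n + pp n, a n.+1 * q n + qq n)).
Proof. by rewrite /=; case: (conv_aux a n) => [[? ?] [? ?]]. Qed.

Lemma qS n : q n.+1 = a n.+1 * q n + qq n. Proof. by rewrite conv_S. Qed.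
Lemma pS n : p n.+1 = a n.+1 * p n + pp n. Proof. by rewrite conv_S. Qed.
Lemma qqS n : qq n.+1 = q n. Proof. by rewrite conv_S. Qed.
Lemma ppS n : pp n.+1 = p n. Proof. by rewrite conv_S. Qed.

Lemma conv_det n : pp n * q n - p n * qq n = (-1) ^+ n.
Proof.
elim: n => [|n IH]; first by [].
rewrite conv_S /= exprS -IH; ring.
Qed.

Lemma conv_qpos n : (forall m, (m < n)%N -> 1 <= a m.+1) ->
  [/\ 0 <= qq n, 1 <= q n, n%:Z <= q n & (0 < n)%N -> 1 <= qq n].
Proof.
elim: n => [|n IH] H; first by [].
have [h1 h2 h3 h4] := IH (fun m hm => H m (ltnW hm)).
have ha := H n (ltnSn n).
rewrite conv_S /=; split => //.
- by apply: le_trans h2.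
- nia.
- case: n {IH H} h1 h2 h3 h4 ha => [|n] h1 h2 h3 h4 ha; first nia.
  have := h4 isT; nia.
Qed.
End Alg.
Arguments conv_qpos {a n}.

Section Real.
Variable R : realType.
Variable alpha : R.
Local Notation x n := (cf_rem alpha n).
Local Notation a := (pq alpha).
Local Notation pp n := (conv_aux a n).1.1.
Local Notation qq n := (conv_aux a n).1.2.
Local Notation p n := (conv_aux a n).2.1.
Local Notation q n := (conv_aux a n).2.2.

Lemma cf_remS n : x n.+1 = gauss (x n).
Proof. by rewrite /cf_rem iterS. Qed.

Lemma x_range n : 0 < alpha < 1 -> 0 <= x n < 1.
Proof.
move=> /andP[h0 h1]; case: n => [|n]; first by rewrite /cf_rem /= (ltW h0).
rewrite cf_remS /gauss.
have := floorD1_gt (x n)^-1; have := floor_le (x n)^-1.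
rewrite intrD /=; set f := _%:~R; lra.
Qed.

Lemma pqS n : a n.+1 = Num.floor (x n)^-1.
Proof. by []. Qed.

Lemma x_inv n : x n != 0 -> (x n)^-1 = (a n.+1)%:~R + x n.+1.
Proof. by move=> _; rewrite cf_remS /gauss pqS addrC subrK. Qed.

Lemma invariant n : (forall m, (m < n)%N -> x m != 0) ->
  alpha * ((q n)%:~R + (qq n)%:~R * x n) = (p n)%:~R + (pp n)%:~R * x n.
Proof.
elim: n => [|n IH] H; first by rewrite /= /cf_rem /=; ring.
have hx := H n (ltnSn n).
have IH' := IH (fun m hm => H m (ltnW hm)).
rewrite conv_S.
move: (a n.+1) (x n.+1) (x_inv n hx) => A X hA /=.
have e1 : forall u v : R, u + v * x n = x n * (u * (x n)^-1 + v).
  by move=> u v; rewrite mulrDr mulrCA mulfV // mulr1 mulrC.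
rewrite e1 [in RHS]e1 mulrCA in IH'.
move/(mulfI hx): IH'; rewrite hA => E.
have -> : (A * p n + pp n)%:~R + (p n)%:~R * X =
  (p n)%:~R * (A%:~R + X) + (pp n)%:~R :> R.
  by rewrite intrD intrM; ring.
by rewrite -E intrD intrM; ring.
Qed.
End Real.
Arguments x_range {R alpha}.
Arguments pqS {R alpha}.
Arguments x_inv {R alpha}.
Arguments invariant {R alpha n}.

Lemma real_step (R : realType) (g Q Q1 A P P2 Q2 : R) : 0 < g -> 1 <= Q -> 1 <= A ->
  0 < P -> P <= P2 -> Q2 = A * Q1 + Q -> 0 < Q1 ->
  A / (Q * Q2) < g / (P * Q) + g / (P2 * Q2) -> P / g - Q1 < 2 * Q / A.
Proof.
move=> g0 Q1' A1 P0 PP2 eQ2 Q10 h.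
have Q0 : 0 < Q by lra.
have A0 : 0 < A by lra.
have P20 : 0 < P2 by lra.
have Q20 : 0 < Q2 by rewrite eQ2; nra.
have h2 : A * P < g * Q2 + g * Q * (P / P2).
  have k : 0 < Q * Q2 * P by rewrite !mulr_gt0.
  move: h; rewrite -(ltr_pM2r k).
  have -> : A / (Q * Q2) * (Q * Q2 * P) = A * P.
    by field; rewrite !gt_eqF.
  have -> : (g / (P * Q) + g / (P2 * Q2)) * (Q * Q2 * P) = g * Q2 + g * Q * (P / P2).
    by field; rewrite !gt_eqF.
  done.
have h3 : P / P2 <= 1 by rewrite ler_pdivrMr // mul1r.
have h4 : g * Q * (P / P2) <= g * Q by apply: ler_piMr => //; apply: ltW; rewrite mulr_gt0.
have h5 : A * P < g * (A * Q1 + 2 * Q) by rewrite eQ2 in h2; lra.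
rewrite ltr_pdivlMr // mulrBl ltrBlDr.
have -> : P / g * A = (A * P) / g by rewrite mulrC mulrA.
rewrite ltr_pdivrMr //; lra.
Qed.

Lemma natr_abs_ge0 (R : numDomainType) (z : int) : 0 <= z -> ((`|z|%N)%:R : R) = z%:~R.
Proof. by move=> hz; rewrite natr_absz ger0_norm. Qed.

Section Dioph.
Variables (R : realType) (gamma tau alpha : R).
Hypothesis hg : 0 < gamma.
Hypothesis hD : alpha \in Dgt gamma tau.
Local Notation x n := (cf_rem alpha n).
Local Notation a := (pq alpha).
Local Notation pp n := (conv_aux a n).1.1.
Local Notation qq n := (conv_aux a n).1.2.
Local Notation p n := (conv_aux a n).2.1.
Local Notation q n := (conv_aux a n).2.2.

Let hD' : (0 < alpha < 1) /\ forall (k : nat) (z : int), (0 < k)%N ->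
       gamma / (k%:R `^ tau) <= `|k%:R * alpha - z%:~R|.
Proof. by move: hD; rewrite in_setE. Qed.

Lemma dioph (z w : int) : 1 <= z ->
  gamma / (z%:~R `^ tau) <= `|z%:~R * alpha - w%:~R|.
Proof.
move=> hz; have := (proj2 hD') `|z|%N w.
rewrite natr_abs_ge0; last by apply: le_trans hz.
apply; rewrite absz_gt0; apply/negP => /eqP z0; rewrite z0 in hz; done.
Qed.

Lemma a_ge1_of m : x m != 0 -> 1 <= a m.+1.
Proof.
move=> hx; rewrite pqS floor_ge_int /=.
have /andP[h0 h1] := x_range m (proj1 hD').
have hxp : 0 < x m by rewrite lt_neqAle eq_sym hx h0.
by rewrite invf_ge1 // ltW.
Qed.

Lemma x_nz_all n : forall m, (m < n)%N -> x m != 0.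
Proof.
elim: n => [//|n IH] m; rewrite ltnS leq_eqVlt => /orP[/eqP->|]; last exact: IH.
have [_ hq _ _] := conv_qpos (fun k hk => a_ge1_of k (IH k hk)).
have I := invariant IH.
apply/negP => /eqP x0; rewrite x0 !mulr0 !addr0 in I.
have := @dioph (q n) (p n) hq; rewrite [_ * alpha]mulrC I subrr normr0.
rewrite leNgt divr_gt0 // powR_gt0 //.
by rewrite ltr0z; apply: lt_le_trans hq.
Qed.

Lemma x_nz n : x n != 0.
Proof. exact: (x_nz_all n.+1 n (ltnSn n)). Qed.

Lemma a_ge1 m : 1 <= a m.+1.
Proof. exact: a_ge1_of m (x_nz m). Qed.

Lemma qprops n : [/\ 0 <= qq n, 1 <= q n, n%:Z <= q n & (0 < n)%N -> 1 <= qq n].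
Proof. exact: conv_qpos (fun m _ => a_ge1 m). Qed.

Lemma key_eq n : exists2 S : R, (q n.+1)%:~R <= S &
  `|(q n)%:~R * alpha - (p n)%:~R| * S = 1.
Proof.
have [_ hq _ _] := qprops n.
have I := invariant (x_nz_all n.+1).
have D := conv_det a n.+1.
rewrite qS pS qqS ppS in I D.
have := x_range n.+1 (proj1 hD'); move: (x n.+1) I => X I /andP[X0 X1].
have D' := congr1 (intr : int -> R) D.
rewrite rmorphB !rmorphM !rmorphD !rmorphM rmorphXn rmorphN1 /= in D'.
rewrite qS.
exists ((a n.+1 * q n + qq n)%:~R + (q n)%:~R * X).
  by rewrite lerDl mulr_ge0 // ler0z; apply: le_trans hq.
have hS : 0 <= (a n.+1 * q n + qq n)%:~R + (q n)%:~R * X.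
  have [_ hq1 _ _] := qprops n.+1; rewrite qS in hq1.
  have hX : 0 <= (q n)%:~R * X by rewrite mulr_ge0 // ler0z (le_trans _ hq).
  by rewrite addr_ge0 // ler0z (le_trans _ hq1).
rewrite -(ger0_norm hS) -normrM.
have -> : ((q n)%:~R * alpha - (p n)%:~R) * ((a n.+1 * q n + qq n)%:~R + (q n)%:~R * X)
  = (q n)%:~R * (alpha * ((a n.+1 * q n + qq n)%:~R + (q n)%:~R * X)) - (p n)%:~R * ((a n.+1 * q n + qq n)%:~R + (q n)%:~R * X) by ring.
rewrite I !rmorphD !rmorphM /=.
have -> : (q n)%:~R * ((a n.+1)%:~R * (p n)%:~R + (pp n)%:~R + (p n)%:~R * X) -
  (p n)%:~R * ((a n.+1)%:~R * (q n)%:~R + (qq n)%:~R + (q n)%:~R * X) = 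
  - ((p n)%:~R * ((a n.+1)%:~R * (q n)%:~R + (qq n)%:~R) -
       ((a n.+1)%:~R * (p n)%:~R + (pp n)%:~R) * (q n)%:~R) :> R by ring.
by rewrite D' normrN normrX normrN normr1 expr1n.
Qed.

Lemma key n : gamma / ((q n)%:~R `^ tau) <= ((q n.+1)%:~R)^-1.
Proof.
have [S hS E] := key_eq n.
have [_ hq1 _ _] := qprops n.+1.
have hq1' : 0 < (q n.+1)%:~R :> R by rewrite ltr0z (lt_le_trans _ hq1).
have hS0 : 0 < S by apply: lt_le_trans hS.
have [_ hq _ _] := qprops n.
apply: (le_trans (@dioph (q n) (p n) hq)).
have -> : `|(q n)%:~R * alpha - (p n)%:~R| = S^-1.
  have hS1 : S != 0 by rewrite gt_eqF.
  by apply: (mulIf hS1); rewrite E mulVf.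
by rewrite lef_pV2 // posrE.
Qed.

Lemma cond_bound n : 0 <= tau -> ~~ odd n ->
  (cf_p alpha n)%:~R / (cf_q alpha n)%:~R + gamma / ((cf_q alpha n)%:~R `^ (tau + 1))
   > (cf_p alpha n.+2)%:~R / (cf_q alpha n.+2)%:~R
     - gamma / ((cf_q alpha n.+2)%:~R `^ (tau + 1)) ->
  ((cf_q alpha n)%:~R `^ tau) / gamma - (cf_q alpha n.+1)%:~R
    < 2 * (cf_q alpha n)%:~R / (pq alpha n.+2)%:~R.
Proof.
move=> ht hev; rewrite /cf_p /cf_q.
have D := conv_det a n.+1.
rewrite !qqS !ppS in D.
have sgn : (-1) ^+ n.+1 = -1 :> int by rewrite -signr_odd oddS (negbTE hev) expr1.
rewrite sgn in D.
have [_ hq _ _] := qprops n.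
have [_ hq1 _ _] := qprops n.+1.
have [_ hq2 _ _] := qprops n.+2.
have ha := a_ge1 n.+1.
rewrite (qS _ n.+1) (pS _ n.+1) !qqS !ppS in hq2 *.
set A := a n.+2 in ha hq2 *.
set q0 := q n in hq hq1 hq2 D *; set q1 := q n.+1 in hq1 hq2 D *.
set p0 := p n in D *; set p1 := p n.+1 in D *.
have toR : forall z : int, 1 <= z -> 1 <= (z%:~R : R).
  by move=> z hz; rewrite (_ : 1 = (1:int)%:~R) // ler_int.
have hQ := toR _ hq; have hQ1 := toR _ hq1; have hQ2 := toR _ hq2; have hA := toR _ ha.
have D' := congr1 (intr : int -> R) D.
rewrite rmorphB !rmorphM /= in D'.
rewrite !rmorphD !rmorphM /=.
rewrite !rmorphD !rmorphM /= in hQ2.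
set Q := (q0%:~R : R) in hQ hQ2 D' *; set Q1 := (q1%:~R : R) in hQ1 hQ2 D' *.
set P1 := (p1%:~R : R) in D' *; set P0 := (p0%:~R : R) in D' *.
set AR := (A%:~R : R) in hA hQ2 *.
have Q0 : 0 < Q by lra.
have AQ : 0 <= AR * Q1 by apply: mulr_ge0; lra.
have Q20 : 0 < AR * Q1 + Q by lra.
have pw : forall y : R, 0 < y -> y `^ (tau + 1) = y `^ tau * y.
  move=> y y0; rewrite powRD; last by rewrite (gt_eqF y0) implybT.
  by rewrite powRr1 // ltW.
rewrite !pw //.
move=> h; apply: (@real_step R gamma Q Q1 AR (Q `^ tau) ((AR * Q1 + Q) `^ tau) (AR * Q1 + Q) hg hQ hA _ _ erefl) => //.
- by rewrite powR_gt0.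
- by apply: ge0_ler_powR => //; rewrite ?nnegrE; lra.
- lra.
have e : (AR * P1 + P0) / (AR * Q1 + Q) - P0 / Q = AR / (Q * (AR * Q1 + Q)).
  have D1 : P0 * Q1 - P1 * Q = -1 by rewrite D' rmorphN1.
  have -> : AR / (Q * (AR * Q1 + Q)) = AR * (P1 * Q - P0 * Q1) / (Q * (AR * Q1 + Q)).
    by congr (_ / _); rewrite (_ : P1 * Q - P0 * Q1 = 1) ?mulr1 //; lra.
  by field; rewrite !gt_eqF.
lra.
Qed.

Lemma lower n : (cf_q alpha n.+1)%:~R <= ((cf_q alpha n)%:~R `^ tau) / gamma.
Proof.
have := key n; rewrite /cf_q.
have [_ hq1 _ _] := qprops n.+1.
have [_ hq _ _] := qprops n.
have hQ1 : 0 < (q n.+1)%:~R :> R by rewrite ltr0z; apply: lt_le_trans hq1.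
have hQ : 0 < (q n)%:~R :> R by rewrite ltr0z; apply: lt_le_trans hq.
have hP : 0 < (q n)%:~R `^ tau :> R by rewrite powR_gt0.
move: ((q n.+1)%:~R : R) ((q n)%:~R `^ tau : R) hQ1 hP => Q1 P hQ1 hP h.
rewrite ler_pdivlMr //.
rewrite ler_pdivrMr // in h.
have := ler_wpM2l (ltW hQ1) h.
by rewrite mulrA mulfV ?gt_eqF // mul1r.
Qed.

Lemma q_ge n : (n%:Z <= cf_q alpha n) /\ (1 <= cf_q alpha n).
Proof. by have [_ h1 h2 _] := qprops n. Qed.

Lemma a_ge1' n : 1 <= pq alpha n.+1.
Proof. exact: a_ge1. Qed.
End Dioph.

Lemma eseries_le_bound (R : realType) (u : nat -> R) (b : R) :
  (forall n, 0 <= u n) -> (forall M, \sum_(0 <= n < M) u n <= b) ->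
  (\sum_(n <oo) (u n)%:E <= b%:E)%E.
Proof.
move=> u0 hb; apply: lime_le.
  by apply: is_cvg_nneseries => n _ _; rewrite lee_fin.
by apply: nearW => M; rewrite sumEFin lee_fin.
Qed.

Lemma pow_tele (R : realType) (e Q : R) : 0 < e -> 1 < Q ->
  e * (Q `^ (1 + e))^-1 <= ((Q - 1) `^ e)^-1 - (Q `^ e)^-1.
Proof.
move=> e0 Q1.
set A := Q - 1.
have A0 : 0 < A by rewrite /A; lra.
have Q0 : 0 < Q by lra.
set r := Q / A.
have r0 : 0 < r by rewrite divr_gt0.
have eQ : Q = A * r by rewrite /r mulrC divfK // gt_eqF.
have lnr : Q^-1 <= ln r.
  have h := @le_ln1Dx R (- Q^-1).
  have hq : - 1 < - Q^-1.
    rewrite ltrN2 invf_lt1 //.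
  have := h hq.
  have -> : 1 - Q^-1 = r^-1.
    by rewrite /r invf_div /A; field; rewrite !gt_eqF.
  rewrite lnV ?posrE //; lra.
set s := r `^ e.
have hs : 1 + e / Q <= s.
  rewrite /s /powR gt_eqF //.
  apply: le_trans (expR_ge1Dx _).
  rewrite lerD2l ler_pM2l //.
have s0 : 0 < s by apply: powR_gt0.
set B := A `^ e.
have B0 : 0 < B by apply: powR_gt0.
have -> : Q `^ (1 + e) = Q * (B * s).
  rewrite powRD; last by rewrite (gt_eqF Q0) implybT.
  by rewrite powRr1 ?(ltW Q0) // eQ powRM ?ltW.
have -> : Q `^ e = B * s by rewrite eQ powRM ?ltW.
rewrite -subr_ge0.
have -> : B^-1 - (B * s)^-1 - e * (Q * (B * s))^-1 = (s - 1 - e / Q) / (B * s).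
  by field; rewrite !gt_eqF.
apply: divr_ge0; first lra.
by rewrite ltW // mulr_gt0.
Qed.

Lemma delta_sum (R : realType) (e : R) : 0 < e -> forall M : nat,
  \sum_(0 <= k < M) (((k.+2)%:R : R) `^ (1 + e))^-1 <= e^-1.
Proof.
move=> e0 M.
suff : e * \sum_(0 <= k < M) (((k.+2)%:R : R) `^ (1 + e))^-1 <= 1 - (((M.+1)%:R : R) `^ e)^-1.
  move=> h; rewrite -(ler_pM2l e0) mulfV ?gt_eqF //.
  apply: le_trans h _; rewrite lerBlDr lerDl invr_ge0 powR_ge0 //.
elim: M => [|M IH].
  by rewrite big_geq // mulr0 powR1 invr1 subrr.
rewrite big_nat_recr //= mulrDr.
have := @pow_tele R e (M.+2)%:R e0.
rewrite (_ : (M.+2)%:R - 1 = (M.+1)%:R :> R); last by rewrite -natr1 addrK.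
have : 1 < (M.+2)%:R :> R by rewrite ltr1n.
move=> h1 /(_ h1) h2; lra.
Qed.


Local Open Scope classical_set_scope.
Lemma itv_bnd {R : realType} {K d N : R} : 0 < K -> 0 < d -> 2 <= N ->
  K / N - K / (N + d) <= K * d * ((N - 1)^-1 - N^-1) /\ 0 <= K * d * ((N - 1)^-1 - N^-1).
Proof.
move=> K0 d0 N2.
have N0 : 0 < N by lra.
have N10 : 0 < N - 1 by lra.
have Nd : 0 < N + d by lra.
have -> : K * d * ((N - 1)^-1 - N^-1) = (K * d) * (N * (N - 1))^-1.
  by field; rewrite !gt_eqF.
have -> : K / N - K / (N + d) = (K * d) * (N * (N + d))^-1.
  by field; rewrite !gt_eqF.
have Kd : 0 < K * d by rewrite mulr_gt0.
split; last by apply: mulr_ge0; [exact: ltW | rewrite invr_ge0 ltW // mulr_gt0].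
rewrite ler_pM2l // lef_pV2 ?posrE ?mulr_gt0 //.
by rewrite ler_pM2l //; lra.
Qed.

Section Meas.
Variables (R : realType) (tau e : R).
Hypothesis htau : 1 <= tau.
Hypothesis he : 0 < e.

Definition Qr (k : nat) : R := (k.+2)%:R.
Definition KK k := Qr k `^ tau.
Definition dd k := (Qr k `^ (1 + e))^-1.
Definition N0 k : nat := (Num.truncn (2 * KK k - 1)).+1.
Definition Iset k m : set R := `[KK k / ((N0 k + m)%:R + dd k), KK k / (N0 k + m)%:R].
Definition Fset k := \bigcup_m Iset k m.

Lemma Qr_ge2 k : 2 <= Qr k.
Proof. by rewrite /Qr ler_nat. Qed.

Lemma KK_ge k : Qr k <= KK k.
Proof.
rewrite /KK; have := Qr_ge2 k; move: (Qr k) => Q hQ.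
apply: le1r_powR => //; lra.
Qed.

Lemma dd_gt0 k : 0 < dd k.
Proof.
rewrite /dd; have := Qr_ge2 k; move: (Qr k) => Q hQ.
rewrite invr_gt0 powR_gt0 //; lra.
Qed.

Lemma dd_le1 k : dd k <= 1.
Proof.
rewrite /dd; have := Qr_ge2 k; move: (Qr k) => Q hQ.
have hp : Q <= Q `^ (1 + e).
  apply: le1r_powR.
  - lra.
  - by rewrite lerDl ltW.
rewrite invf_le1; first lra.
apply: lt_le_trans hp; lra.
Qed.

Lemma N0_ge k : KK k <= (N0 k)%:R - 1.
Proof.
have := truncnS_gt (2 * KK k - 1); rewrite /N0 -natr1.
have := KK_ge k; have := Qr_ge2 k.
move: (Num.truncn (2 * KK k - 1)) => t.
move: (Qr k) (KK k) (t%:R : R) => Q K T; lra.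
Qed.

Lemma Fset_meas k : measurable (Fset k).
Proof. by apply: bigcupT_measurable => m; exact: measurable_itv. Qed.

Lemma mu_I k m : (lebesgue_measure (Iset k m) <=
  ((KK k * dd k) * ((((N0 k + m)%:R - 1)^-1 - ((N0 k + m)%:R)^-1)))%:E)%E.
Proof.
rewrite /Iset lebesgue_measure_itv /=.
have hN : 2 <= (N0 k + m)%:R :> R.
  have := N0_ge k; have := KK_ge k; have := Qr_ge2 k.
  have : (N0 k)%:R <= (N0 k + m)%:R :> R by rewrite ler_nat leq_addr.
  move: (N0 k)%:R ((N0 k + m)%:R) (Qr k) (KK k) => a b c d'; lra.
have K0 : 0 < KK k by have := KK_ge k; have := Qr_ge2 k; move: (Qr k) (KK k) => a b; lra.
have [h1 h2] := itv_bnd K0 (dd_gt0 k) hN.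
case: ifP => _; last by rewrite lee_fin.
by rewrite -EFinD lee_fin.
Qed.

Lemma mu_F k : (lebesgue_measure (Fset k) <= (dd k)%:E)%E.
Proof.
apply: (@le_trans _ _ (\sum_(m <oo) lebesgue_measure (Iset k m))%E).
  apply: measure_sigma_subadditive => //.
  - by move=> m; exact: measurable_itv.
  - exact: Fset_meas.
set f := fun m : nat => (KK k * dd k) * ((((N0 k + m)%:R - 1)^-1 - ((N0 k + m)%:R)^-1)).
apply: (@le_trans _ _ (\sum_(m <oo) (f m)%:E)%E).
  apply: lee_nneseries; first by move=> m _ _; apply: measure_ge0.
  by move=> m _; rewrite /f; apply: mu_I.
have K0 : 0 < KK k by have := KK_ge k; have := Qr_ge2 k; move: (Qr k) (KK k) => a b; lra.
have d0 := dd_gt0 k.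
have hN0 := N0_ge k.
have A0 : 0 < ((N0 k)%:R - 1 : R) by lra.
apply: eseries_le_bound.
  move=> m; rewrite /f.
  have hN : 2 <= (N0 k + m)%:R :> R.
    have := KK_ge k; have := Qr_ge2 k.
    have : (N0 k)%:R <= (N0 k + m)%:R :> R by rewrite ler_nat leq_addr.
    move: (N0 k)%:R ((N0 k + m)%:R) (Qr k) (KK k) hN0 => a b c d' h; lra.
  by have [] := itv_bnd K0 d0 hN.
move=> M.
have tele : forall M, \sum_(0 <= m < M) f m =
    KK k * dd k * (((N0 k)%:R - 1)^-1 - ((N0 k + M)%:R - 1)^-1).
  elim=> [|M' IH]; first by rewrite big_geq // addn0 subrr mulr0.
  rewrite big_nat_recr //= IH /f.
  have -> : (N0 k + M'.+1)%:R - 1 = (N0 k + M')%:R :> R by rewrite addnS -natr1 addrK.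
  ring.
rewrite tele.
have hM : 0 <= ((N0 k + M)%:R - 1 : R)^-1.
  rewrite invr_ge0.
  have : (N0 k)%:R <= (N0 k + M)%:R :> R by rewrite ler_nat leq_addr.
  move: (N0 k)%:R ((N0 k + M)%:R) A0 => a b; lra.
have Kd : 0 <= KK k * dd k by rewrite mulr_ge0 // ltW.
apply: (@le_trans _ _ (KK k * dd k * ((N0 k)%:R - 1)^-1)).
  by rewrite ler_wpM2l // lerBlDr lerDl.
have h1 : KK k / ((N0 k)%:R - 1) <= 1 by rewrite ler_pdivrMr // mul1r.
rewrite (_ : KK k * dd k * ((N0 k)%:R - 1)^-1 = dd k * (KK k / ((N0 k)%:R - 1))); last by ring.
by apply: ler_piMr => //; exact: ltW.
Qed.

Lemma sum_F : (\sum_(k <oo) lebesgue_measure (Fset k) < +oo)%E.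
Proof.
apply: (@le_lt_trans _ _ (\sum_(k <oo) (dd k)%:E)%E).
  apply: lee_nneseries; first by move=> m _ _; apply: measure_ge0.
  by move=> m _; apply: mu_F.
apply: (@le_lt_trans _ _ (e^-1)%:E); last exact: ltry.
apply: eseries_le_bound; first by move=> k; exact: ltW (dd_gt0 k).
exact: delta_sum.
Qed.

Lemma mem_F k (g : R) (N : nat) : 0 < g -> g < 2^-1 ->
  N%:R <= KK k / g -> KK k / g < N%:R + dd k -> Fset k g.
Proof.
move=> g0 g1 hN1 hN2.
have K0 : 0 < KK k by have := KK_ge k; have := Qr_ge2 k; move: (Qr k) (KK k) => a b; lra.
have d1 := dd_le1 k.
have h2K : 2 * KK k < KK k / g.
  rewrite ltr_pdivlMr //.
  have g2 : 2 * g < 1 by lra.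
  move: (KK k) K0 => K K0; nra.
have hN : 2 * KK k - 1 < N%:R by move: (KK k / g) (dd k) hN1 hN2 h2K d1 => X d; lra.
have Npos : (0 < N)%N.
  rewrite lt0n; apply/eqP => N0'; rewrite N0' in hN.
  have := KK_ge k; have := Qr_ge2 k; move: (Qr k) (KK k) hN => a b; lra.
have hN0 : (N0 k <= N)%N.
  case: N Npos hN {hN1 hN2} => // N' _ hN.
  by rewrite /N0 ltnS truncn_le_nat.
exists (N - N0 k)%N => //.
rewrite /Iset /= subnKC // in_itv /=.
have Nr : 0 < N%:R :> R by rewrite ltr0n.
have Nd : 0 < N%:R + dd k :> R by have := dd_gt0 k; lra.
apply/andP; split.
- rewrite ler_pdivrMr //.
  rewrite ltr_pdivrMr // in hN2; rewrite mulrC; exact: ltW.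
- rewrite ler_pdivlMr // mulrC.
  by rewrite ler_pdivlMr // in hN1.
Qed.
End Meas.

Theorem lemma8 (R : realType) (tau : R) (htau : 3 < tau) :
  (@lebesgue_measure R).-negligible
    [set gamma : R | 0 < gamma < 2^-1 /\
      ~ (forall alpha : R, alpha \in Dgt gamma tau ->
          (forall N : nat, exists n : nat, (N <= n)%N /\ ~~ odd n /\
             (cf_p alpha n)%:~R / (cf_q alpha n)%:~R
               + gamma / ((cf_q alpha n)%:~R `^ (tau + 1))
             > (cf_p alpha n.+2)%:~R / (cf_q alpha n.+2)%:~R
               - gamma / ((cf_q alpha n.+2)%:~R `^ (tau + 1))) ->
          forall eps : R, 0 < eps -> exists C : R, 0 < C /\
            forall n : nat, ~~ odd n ->
             (cf_p alpha n)%:~R / (cf_q alpha n)%:~R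
               + gamma / ((cf_q alpha n)%:~R `^ (tau + 1))
             > (cf_p alpha n.+2)%:~R / (cf_q alpha n.+2)%:~R
               - gamma / ((cf_q alpha n.+2)%:~R `^ (tau + 1)) ->
             (pq alpha n.+2)%:~R <= C * ((cf_q alpha n)%:~R `^ (2 + eps)))].
Proof.
have tau1 : 1 <= tau by lra.
have tau0 : 0 <= tau by lra.
pose ek (j : nat) : R := ((j.+1)%:R)^-1.
have ek0 : forall j, 0 < ek j by move=> j; rewrite /ek invr_gt0 ltr0n.
have H : (@lebesgue_measure R).-negligible (\bigcup_j lim_sup_set (Fset R tau (ek j))).
  apply: negligible_bigcup => j.
  exists (lim_sup_set (Fset R tau (ek j))); split => //.
  - apply: bigcapT_measurable => n; apply: bigcup_measurable => k _.
    exact: Fset_meas.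
  - apply: lim_sup_set_cvg0; first by move=> k; exact: Fset_meas.
    exact: sum_F.
apply: negligibleS H.
move=> g [/andP[g0 g1] nP]; apply: contrapT => hnot; apply: nP.
move=> alpha hal _ eps heps.
pose j := Num.truncn (eps^-1).
have hj : ek j < eps.
  rewrite /ek -[eps]invrK ltf_pV2 ?posrE ?invr_gt0 ?ltr0n //.
  exact: truncnS_gt.
set e := ek j.
have e0 : 0 < e := ek0 j.
have [M hM] : exists M, forall k, (M <= k)%N -> ~ Fset R tau e k g.
  apply: contrapT => hn; apply: hnot; exists j => //.
  move=> n _; apply: contrapT => hn2; apply: hn; exists n => k hk hF.
  by apply: hn2; exists k.
pose S := \sum_(i < M.+2) `|(pq alpha i.+2)%:~R : R|.
have S0 : 0 <= S by apply: sumr_ge0 => i _.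
exists (2 + S); split; first lra.
move=> n hev hcond.
have [hqn hq1] := @q_ge R g tau alpha g0 hal n.
set Q := (cf_q alpha n)%:~R : R.
have hQ1 : 1 <= Q by rewrite /Q (_ : 1 = (1:int)%:~R) // ler_int.
have hpow : forall r s : R, r <= s -> Q `^ r <= Q `^ s by move=> r s; apply: ler_powR.
have hP1 : 1 <= Q `^ (2 + eps).
  by rewrite -[X in X <= _](powRr0 Q); apply: hpow; lra.
set A := (pq alpha n.+2)%:~R : R.
have CS : 2 + S <= (2 + S) * Q `^ (2 + eps) by rewrite ler_peMr //; lra.
have [small|big] := ltP (cf_q alpha n) (M.+2)%:Z.
  have hn : (n < M.+2)%N by have := le_lt_trans hqn small; rewrite ltz_nat.
  apply: le_trans CS.
  have : A <= S.
    apply: le_trans (ler_norm A) _.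
    rewrite /S (bigD1 (Ordinal hn)) //=.
    by rewrite lerDl sumr_ge0.
  lra.
have q0 : 0 <= cf_q alpha n by apply: le_trans hq1.
have qnat : ((`|cf_q alpha n|%N)%:R : R) = Q by rewrite natr_abs_ge0.
have hk : (M.+2 <= `|cf_q alpha n|%N)%N.
  by rewrite -lez_nat gez0_abs.
pose k := (`|cf_q alpha n|%N - 2)%N.
have h2q : (2 <= `|cf_q alpha n|%N)%N by apply: leq_trans hk.
have hMk : (M <= k)%N by rewrite /k -(leq_add2r 2) subnK // addn2.
have eQ : Qr R k = Q.
  by rewrite /Qr -qnat /k -addn2 subnK.
have hQ0 : 0 < Q by lra.
have hP0 : 0 < Q `^ (1 + e) by rewrite powR_gt0.
have e2 : Q `^ (2 + e) = Q * Q `^ (1 + e).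
  rewrite (_ : 2 + e = 1 + (1 + e)); last by ring.
  rewrite powRD; last by rewrite (gt_eqF hQ0) implybT.
  by rewrite powRr1 // ltW.
have hAe : A <= 2 * Q `^ (2 + e).
  rewrite leNgt; apply/negP => hbig.
  have A0 : 0 < A.
    apply: lt_trans hbig; rewrite e2 mulr_gt0 // mulr_gt0 //.
  have hb := @cond_bound R g tau alpha g0 hal n tau0 hev hcond.
  have hl := @lower R g tau alpha g0 hal n.
  have hd : 2 * Q / A < dd R e k.
    rewrite /dd eQ ltr_pdivrMr // [_^-1 * _]mulrC ltr_pdivlMr //.
    by rewrite -mulrA -e2.
  apply: (hM k hMk).
  apply: (@mem_F R tau e tau1 e0 k g (`|cf_q alpha n.+1|%N) g0 g1).
  - rewrite /KK eQ natr_abs_ge0 //.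
    by apply: le_trans (proj2 (@q_ge R g tau alpha g0 hal n.+1)).
  - rewrite /KK eQ natr_abs_ge0; last first.
      by apply: le_trans (proj2 (@q_ge R g tau alpha g0 hal n.+1)).
    move: hb hd; rewrite -/Q -/A.
    move: (Q `^ tau / g) ((cf_q alpha n.+1)%:~R : R) (2 * Q / A) (dd R e k) => X Y Z W.
    lra.
apply: (le_trans hAe).
have h1 : Q `^ (2 + e) <= Q `^ (2 + eps) by apply: hpow; rewrite lerD2l; apply: ltW.
have h2 : 0 <= Q `^ (2 + eps) by apply: powR_ge0.
have h3 : 2 * Q `^ (2 + e) <= 2 * Q `^ (2 + eps) by rewrite ler_pM2l.
apply: le_trans h3 _.
by rewrite ler_wpM2r // lerDl.
Qed.
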